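(* Let $C=\{c_1,\dots,c_m\}\subset\mathbb{R}^d_{\ge 0}$ be a finite nonempty set of vectors with $\|c_j\|_2=1$, and let $v\in\mathbb{R}^d_{\ge 0}$ with $\|v\|_2=1$ and $v\in\mathrm{Cone}(C)$. Then $\max_{c\in C}v^\top c\ge d^{-1/2}$.
   Context: $\mathrm{Cone}(C)$ is the set of nonnegative linear combinations of elements of $C$. *)

(* Defs.v *)
From mathcomp Require Import all_boot all_order all_algebra.
Set Implicit Arguments. Unset Strict Implicit. Unset Printing Implicit Defensive.
Import Order.TTheory GRing.Theory Num.Theory.
Local Open Scope ring_scope.

Definition dotv (R : rcfType) (d : nat) (u w : 'rV[R]_d) : R :=
  \sum_(i < d) u 0 i * w 0 i.

Definition norm2 (R : rcfType) (d : nat) (u : 'rV[R]_d) : R :=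
  Num.sqrt (dotv u u).

Definition nonneg_vec (R : rcfType) (d : nat) (u : 'rV[R]_d) : Prop :=
  forall i, 0 <= u 0 i.

Definition in_cone (R : rcfType) (d m : nat) (c : 'I_m -> 'rV[R]_d)
  (v : 'rV[R]_d) : Prop :=
  exists lam : 'I_m -> R, (forall j, 0 <= lam j) /\ v = \sum_(j < m) lam j *: c j.

(* Main.v *)
Require Import Defs.
From mathcomp Require Import lra.
From mathcomp Require Import all_boot all_order all_algebra.
Import Order.TTheory GRing.Theory Num.Theory.
Local Open Scope ring_scope.

Section Aux.
Variables (R : rcfType) (d : nat).

Definition sv (u : 'rV[R]_d) : R := \sum_(i < d) u 0 i.

Lemma dot_ge0 (u : 'rV[R]_d) : 0 <= dotv u u.
Proof. by apply: sumr_ge0 => i _; rewrite -expr2 sqr_ge0. Qed.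

Lemma norm1_dot (u : 'rV[R]_d) : norm2 u = 1 -> dotv u u = 1.
Proof.
move=> h; have := sqr_sqrtr (dot_ge0 u); rewrite /norm2 in h.
by rewrite h expr1n.
Qed.

Lemma sv_ge1 (u : 'rV[R]_d) : nonneg_vec u -> dotv u u = 1 -> 1 <= sv u.
Proof.
move=> hu h1; rewrite -h1 /dotv /sv; apply: ler_sum => i _.
have hi : u 0 i * u 0 i <= 1.
  rewrite -h1 /dotv (bigD1 i) //= lerDl; apply: sumr_ge0 => k _.
  by rewrite -expr2 sqr_ge0.
have := hu i; nra.
Qed.

Lemma sv_sq (u : 'rV[R]_d) : sv u ^+ 2 <= d%:R * dotv u u.
Proof.
rewrite /sv /dotv expr2.
have [S2 hS2] : exists S2, S2 = \sum_(i < d) u 0 i * u 0 i by eexists.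
rewrite -hS2 mulr_suml.
under eq_bigr => i _ do rewrite mulr_sumr.
have E : \sum_(i < d) \sum_(k < d) (u 0 i * u 0 i + u 0 k * u 0 k) = (d%:R * S2) *+ 2.
  rewrite mulr2n; under eq_bigr => i _ do rewrite big_split /= sumr_const card_ord.
  by rewrite big_split /= sumrMnl -hS2 sumr_const card_ord mulr_natl.
have H : (\sum_(i < d) \sum_(k < d) u 0 i * u 0 k) *+ 2 <=
         \sum_(i < d) \sum_(k < d) (u 0 i * u 0 i + u 0 k * u 0 k).
  rewrite -sumrMnl; apply: ler_sum => i _; rewrite -sumrMnl; apply: ler_sum => k _.
  have := sqr_ge0 (u 0 i - u 0 k); rewrite sqrrB mulr2n; lra.
rewrite E in H; rewrite -(ler_pMn2r (n:=2)) //.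
Qed.
Lemma dot_lin m (v : 'rV[R]_d) (lam : 'I_m -> R) (c : 'I_m -> 'rV[R]_d) :
  dotv v (\sum_(j < m) lam j *: c j) = \sum_(j < m) lam j * dotv v (c j).
Proof.
rewrite /dotv; under eq_bigr => i _ do rewrite summxE mulr_sumr.
rewrite exchange_big /=; apply: eq_bigr => j _; rewrite mulr_sumr.
by apply: eq_bigr => i _; rewrite mxE mulrCA.
Qed.

Lemma sv_lin m (lam : 'I_m -> R) (c : 'I_m -> 'rV[R]_d) :
  sv (\sum_(j < m) lam j *: c j) = \sum_(j < m) lam j * sv (c j).
Proof.
rewrite /sv; under eq_bigr => i _ do rewrite summxE.
rewrite exchange_big /=; apply: eq_bigr => j _; rewrite mulr_sumr.
by apply: eq_bigr => i _; rewrite mxE.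
Qed.

Lemma dot_nn (u w : 'rV[R]_d) : nonneg_vec u -> nonneg_vec w -> 0 <= dotv u w.
Proof. by move=> hu hw; apply: sumr_ge0 => i _; rewrite mulr_ge0. Qed.
End Aux.
Arguments sv {R d}.
Arguments norm1_dot {R d u}.
Arguments sv_ge1 {R d u}.
Arguments sv_sq {R d}.
Arguments dot_lin {R d m}.
Arguments sv_lin {R d m}.
Arguments dot_nn {R d u w}.

Theorem lemma2 (R : rcfType) (d m : nat) (c : 'I_m.+1 -> 'rV[R]_d)
  (v : 'rV[R]_d) :
  (forall j, nonneg_vec (c j)) ->
  (forall j, norm2 (c j) = 1) ->
  nonneg_vec v -> norm2 v = 1 ->
  in_cone c v ->
  \big[Num.max/dotv v (c ord0)]_(j < m.+1) dotv v (c j) >= (Num.sqrt (d%:R))^-1.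
Proof.
move=> hc hn hv hnv [lam [hlam hvl]].
set M := \big[Num.max/_]_(j < m.+1) _.
have hM j : dotv v (c j) <= M by apply: le_bigmax.
have M0 : 0 <= M by apply: le_trans (hM ord0); apply: dot_nn.
have vv := norm1_dot hnv.
have h1 : 1 <= M * \sum_(j < m.+1) lam j.
  rewrite -{1}vv {2}hvl dot_lin mulr_sumr; apply: ler_sum => j _.
  by rewrite mulrC ler_wpM2r.
have h2 : \sum_(j < m.+1) lam j <= sv v.
  rewrite hvl sv_lin; apply: ler_sum => j _.
  by rewrite ler_peMr // sv_ge1 // norm1_dot.
have h3 : sv v ^+ 2 <= d%:R by have := sv_sq v; rewrite vv mulr1.
have sv0 : 0 <= sv v by apply: sumr_ge0 => i _.
have h4 : sv v <= Num.sqrt (d%:R : R).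
  by have := ler_wsqrtr h3; rewrite sqrtr_sqr ger0_norm.
have h5 : 1 <= M * Num.sqrt (d%:R : R).
  apply: (le_trans h1); apply: ler_wpM2l => //; exact: le_trans h2 h4.
have sp : 0 < Num.sqrt (d%:R : R).
  rewrite lt0r sqrtr_ge0 andbT; apply/eqP => e; move: h5; rewrite e mulr0.
  by rewrite ler10.
by rewrite -div1r ler_pdivrMr.
Qed.
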